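(* Let $m,n$ be relatively prime natural numbers. Let $J$ be the lattice of all clones $C\subseteq\mathcal{O}$ containing the binary addition modulo $mn$, and let $J_m$ (resp. $J_n$) be the lattice of all clones on $\mathbb{Z}_m$ (resp. $\mathbb{Z}_n$) containing the addition modulo $m$ (resp. modulo $n$). Then $J$ is isomorphic to the direct product $J_m\times J_n$, via the mutually inverse maps $C\mapsto (C_m,C_n)$ and $(D,E)\mapsto D\times E$.
   Context: $\mathbb{Z}_k=\{0,\dots,k-1\}$, and $x \bmod k$ is the unique element of $\mathbb{Z}_k$ congruent to $x$ modulo $k$. $\mathcal{O}$ is the set of all finitary operations on $\mathbb{Z}_{mn}$ preserving the congruences $\equiv \pmod m$ and $\equiv\pmod n$. For $k$-ary $f\in\mathcal{O}$, $f_m$ is the operation on $\mathbb{Z}_m$ given by $f_m(x_1,\dots,x_k)=f(x_1,\dots,x_k)\bmod m$, similarly $f_n$. For $k$-ary operations $g$ on $\mathbb{Z}_m$ and $h$ on $\mathbb{Z}_n$, $g\times h$ is the $k$-ary operation on $\mathbb{Z}_{mn}$ whose value at $(x_1,\dots,x_k)$ is the unique element of $\mathbb{Z}_{mn}$ congruent to $g(x_1\bmod m,\dots,x_k\bmod m)$ modulo $m$ and to $h(x_1\bmod n,\dots,x_k\bmod n)$ modulo $n$. For a clone $C\subseteq \mathcal{O}$, $C_m=\{f_m\mid f\in C\}$, $C_n=\{f_n\mid f\in C\}$; for clones $D$ on $\mathbb{Z}_m$, $E$ on $\mathbb{Z}_n$, $D\times E=\{g\times h\mid g\in D, h\in E\text{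 of the same arity}\}$. *)

(* Defs.v *)
From mathcomp Require Import all_boot.
Set Implicit Arguments.
Unset Strict Implicit.
Unset Printing Implicit Defensive.

Definition ord_mod (k : nat) (hk : 0 < k) (x : nat) : 'I_k :=
  Ordinal (ltn_pmod x hk).

Lemma mn_gt0 (m n : nat) : 0 < m -> 0 < n -> 0 < m * n.
Proof. by move=> hm hn; rewrite muln_gt0 hm hn. Qed.

Definition op (A : Type) (k : nat) := ('I_k -> A) -> A.

(* A set of finitary operations (of positive arity): the component at index k
   is the set of (k+1)-ary operations. *)
Definition opset (A : Type) := forall k : nat, op A k.+1 -> Prop.

Definition proj (A : Type) (k : nat) (i : 'I_k) : op A k := fun x => x i.

Definition comp (A : Type) (k l : nat) (f : op A k) (g : 'I_k -> op A l) : op A l :=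
  fun x => f (fun i => g i x).

Definition is_clone (A : Type) (C : opset A) : Prop :=
  (forall (k : nat) (i : 'I_k.+1), C k (proj i)) /\
  (forall (k l : nat) (f : op A k.+1) (g : 'I_k.+1 -> op A l.+1),
      C k f -> (forall i, C l (g i)) -> C l (comp f g)).

Definition subset_ops (A : Type) (C D : opset A) : Prop :=
  forall k f, C k f -> D k f.

Definition eq_ops (A : Type) (C D : opset A) : Prop :=
  forall k f, C k f <-> D k f.

Definition addmod (k : nat) (hk : 0 < k) : op 'I_k 2 :=
  fun x => ord_mod hk (x ord0 + x ord_max).

Definition preserves_mod (N d k : nat) (f : op 'I_N k) : Prop :=
  forall x y : 'I_k -> 'I_N,
    (forall i, x i = y i %[mod d]) -> f x = f y %[mod d].

(* membership in the lattice J: clones on Z_{mn} contained in O and containing + mod mn *)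
Definition in_J (m n : nat) (hm : 0 < m) (hn : 0 < n) (C : opset 'I_(m * n)) : Prop :=
  [/\ is_clone C,
      (forall k f, C k f -> preserves_mod m f /\ preserves_mod n f)
    & C 1 (addmod (mn_gt0 hm hn))].

Definition in_Jk (k : nat) (hk : 0 < k) (D : opset 'I_k) : Prop :=
  is_clone D /\ D 1 (addmod hk).

Definition restr_m (m n : nat) (hm : 0 < m) (hn : 0 < n) (k : nat)
  (f : op 'I_(m * n) k) : op 'I_m k :=
  fun x => ord_mod hm (f (fun i => widen_ord (leq_pmulr m hn) (x i))).

Definition restr_n (m n : nat) (hm : 0 < m) (hn : 0 < n) (k : nat)
  (f : op 'I_(m * n) k) : op 'I_n k :=
  fun x => ord_mod hn (f (fun i => widen_ord (leq_pmull n hm) (x i))).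

Definition prod_op (m n : nat) (hm : 0 < m) (hn : 0 < n) (k : nat)
  (g : op 'I_m k) (h : op 'I_n k) : op 'I_(m * n) k :=
  fun x => ord_mod (mn_gt0 hm hn)
    (chinese m n (g (fun i => ord_mod hm (x i))) (h (fun i => ord_mod hn (x i)))).

Definition clone_m (m n : nat) (hm : 0 < m) (hn : 0 < n) (C : opset 'I_(m * n))
  : opset 'I_m :=
  fun k g => exists f, C k f /\ g = restr_m hm hn f.

Definition clone_n (m n : nat) (hm : 0 < m) (hn : 0 < n) (C : opset 'I_(m * n))
  : opset 'I_n :=
  fun k h => exists f, C k f /\ h = restr_n hm hn f.

Definition clone_prod (m n : nat) (hm : 0 < m) (hn : 0 < n)
  (D : opset 'I_m) (E : opset 'I_n) : opset 'I_(m * n) :=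
  fun k u => exists g h, [/\ D k g, E k h & u = prod_op hm hn g h].

(* Main.v *)
From Stdlib Require Import FunctionalExtensionality ClassicalEpsilon.
Require Import Defs.
From mathcomp Require Import all_boot.
Set Implicit Arguments.
Unset Strict Implicit.

Lemma crt_eq m n (hcop : coprime m n) a b : a < m*n -> b < m*n ->
  a = b %[mod m] -> a = b %[mod n] -> a = b.
Proof.
move=> ha hb h1 h2.
have: a == b %[mod m*n] by rewrite chinese_remainder // h1 h2 !eqxx.
by rewrite !modn_small // => /eqP.
Qed.

Lemma modmn_m m n x : x %% (m * n) = x %[mod m].
Proof. by rewrite modn_dvdm // dvdn_mulr. Qed.
Lemma modmn_n m n x : x %% (m * n) = x %[mod n].
Proof. by rewrite modn_dvdm // dvdn_mull. Qed.

Lemma op_ext m n (hcop : coprime m n) k (u v : op 'I_(m*n) k) :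
  (forall x, (u x : nat) = v x %[mod m]) -> (forall x, (u x : nat) = v x %[mod n]) -> u = v.
Proof.
move=> h1 h2; apply: functional_extensionality => x; apply: val_inj. change (nat_of_ord (u x) = nat_of_ord (v x)).
have := @crt_eq m n hcop (u x) (v x) (ltn_ord _) (ltn_ord _) (h1 x) (h2 x). exact.
Qed.

Lemma prod_op_m m n hm hn (hcop : coprime m n) k (g : op 'I_m k) h x :
  (@prod_op m n hm hn k g h x : nat) = g (fun i => ord_mod hm (x i)) %[mod m].
Proof. by rewrite /= modmn_m chinese_modl. Qed.
Lemma prod_op_n m n hm hn (hcop : coprime m n) k (g : op 'I_m k) h x :
  (@prod_op m n hm hn k g h x : nat) = h (fun i => ord_mod hn (x i)) %[mod n].
Proof. by rewrite /= modmn_n chinese_modr. Qed.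

Lemma restr_m_E m n hm hn k (f : op 'I_(m*n) k) x :
  (@restr_m m n hm hn k f x : nat) = f (fun i => widen_ord (leq_pmulr m hn) (x i)) %% m.
Proof. by []. Qed.

Lemma pres_m m n hm hn k (f : op 'I_(m*n) k) (x : 'I_k -> 'I_(m*n)) :
  preserves_mod m f ->
  (f (fun i => widen_ord (leq_pmulr m hn) (ord_mod hm (x i))) : nat) = f x %[mod m].
Proof. by move=> P; apply: P => i /=; rewrite modn_mod. Qed.
Lemma pres_n m n hm hn k (f : op 'I_(m*n) k) (x : 'I_k -> 'I_(m*n)) :
  preserves_mod n f ->
  (f (fun i => widen_ord (leq_pmull n hm) (ord_mod hn (x i))) : nat) = f x %[mod n].
Proof. by move=> P; apply: P => i /=; rewrite modn_mod. Qed.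

Lemma partA_m m n hm hn C : @in_J m n hm hn C -> in_Jk hm (clone_m hm hn C).
Proof.
case=> [[Cp Cc] Cpres Cadd]; split; first split.
- move=> k i; exists (proj i); split; first exact: Cp.
  apply: functional_extensionality => x; apply: val_inj => /=.
  by rewrite /proj /= modn_small.
- move=> k l f g [F [CF ->]] Cg.
  pose G := fun i => proj1_sig (constructive_indefinite_description _ (Cg i)).
  have HG i : C l (G i) /\ g i = restr_m hm hn (G i)
    := proj2_sig (constructive_indefinite_description _ (Cg i)).
  exists (Defs.comp F G); split; first by apply: Cc => // i; case: (HG i).
  apply: functional_extensionality => x; apply: val_inj => /=.
  rewrite /Defs.comp /=; apply: (proj1 (Cpres _ _ CF)) => i /=.
  by case: (HG i) => _ ->; rewrite /= modn_mod.
- exists (addmod (mn_gt0 hm hn)); split => //.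
  apply: functional_extensionality => x; apply: val_inj => /=.
  by rewrite modmn_m.
Qed.

Lemma partA_n m n hm hn C : @in_J m n hm hn C -> in_Jk hn (clone_n hm hn C).
Proof.
case=> [[Cp Cc] Cpres Cadd]; split; first split.
- move=> k i; exists (proj i); split; first exact: Cp.
  apply: functional_extensionality => x; apply: val_inj => /=.
  by rewrite /proj /= modn_small.
- move=> k l f g [F [CF ->]] Cg.
  pose G := fun i => proj1_sig (constructive_indefinite_description _ (Cg i)).
  have HG i : C l (G i) /\ g i = restr_n hm hn (G i)
    := proj2_sig (constructive_indefinite_description _ (Cg i)).
  exists (Defs.comp F G); split; first by apply: Cc => // i; case: (HG i).
  apply: functional_extensionality => x; apply: val_inj => /=.
  rewrite /Defs.comp /=; apply: (proj2 (Cpres _ _ CF)) => i /=.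
  by case: (HG i) => _ ->; rewrite /= modn_mod.
- exists (addmod (mn_gt0 hm hn)); split => //.
  apply: functional_extensionality => x; apply: val_inj => /=.
  by rewrite modmn_n.
Qed.

Lemma ord_mod_prod_m m n hm hn (hcop : coprime m n) k (g : op 'I_m k) h x :
  ord_mod hm (@prod_op m n hm hn k g h x) = g (fun i => ord_mod hm (x i)).
Proof. by apply: val_inj; rewrite /= prod_op_m // modn_small. Qed.
Lemma ord_mod_prod_n m n hm hn (hcop : coprime m n) k (g : op 'I_m k) h x :
  ord_mod hn (@prod_op m n hm hn k g h x) = h (fun i => ord_mod hn (x i)).
Proof. by apply: val_inj; rewrite /= prod_op_n // modn_small. Qed.

Lemma partB m n hm hn (hcop : coprime m n) D E :
  in_Jk hm D -> in_Jk hn E -> @in_J m n hm hn (clone_prod hm hn D E).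
Proof.
case=> [[Dp Dc] Dadd] [[Ep Ec] Eadd]; split; first split.
- move=> k i; exists (proj i), (proj i); split; [exact: Dp | exact: Ep |].
  apply: esym; apply: (op_ext hcop) => x.
  + by rewrite prod_op_m // /proj /= modn_mod.
  + by rewrite prod_op_n // /proj /= modn_mod.
- move=> k l u v [g0 [h0 [Dg0 Eh0 ->]]] Cv.
  have Cv' : forall i, {p : op 'I_m l.+1 * op 'I_n l.+1 |
      [/\ D l p.1, E l p.2 & v i = prod_op hm hn p.1 p.2]}.
    by move=> i; apply: constructive_indefinite_description;
       case: (Cv i) => a [b Hab]; exists (a, b).
  pose G i := (sval (Cv' i)).1; pose H i := (sval (Cv' i)).2.
  have HG i : [/\ D l (G i), E l (H i) & v i = prod_op hm hn (G i) (H i)]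
    := proj2_sig (Cv' i).
  exists (Defs.comp g0 G), (Defs.comp h0 H); split.
  + by apply: Dc => // i; case: (HG i).
  + by apply: Ec => // i; case: (HG i).
  apply: (op_ext hcop) => x; rewrite /Defs.comp.
  + rewrite !prod_op_m //; congr (nat_of_ord (g0 _) %% m).
    apply: functional_extensionality => i; case: (HG i) => _ _ ->.
    by rewrite ord_mod_prod_m.
  + rewrite !prod_op_n //; congr (nat_of_ord (h0 _) %% n).
    apply: functional_extensionality => i; case: (HG i) => _ _ ->.
    by rewrite ord_mod_prod_n.
- move=> k u [g [h [_ _ ->]]]; split => x y Hxy.
  + rewrite !prod_op_m //; congr (nat_of_ord (g _) %% m).
    by apply: functional_extensionality => i; apply: val_inj; exact: Hxy.
  + rewrite !prod_op_n //; congr (nat_of_ord (h _) %% n).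
    by apply: functional_extensionality => i; apply: val_inj; exact: Hxy.
- exists (addmod hm), (addmod hn); split => //.
  apply: (op_ext hcop) => x.
  + by rewrite prod_op_m // /= modmn_m modn_mod modnDm.
  + by rewrite prod_op_n // /= modmn_n modn_mod modnDm.
Qed.

Lemma lin_mod d c1 c2 e1 e2 a b : c1 = e1 %[mod d] -> c2 = e2 %[mod d] ->
  c1 * a + c2 * b = e1 * a + e2 * b %[mod d].
Proof.
move=> h1 h2.
by rewrite -modnDm -(modnMml c1) h1 modnMml -(modnMml c2) h2 modnMml modnDm.
Qed.

Lemma prod_restr_m m n hm hn (hcop : coprime m n) k (f f' : op 'I_(m*n) k) x :
  preserves_mod m f ->
  (@prod_op m n hm hn k (restr_m hm hn f) (restr_n hm hn f') x : nat) = f x %[mod m].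
Proof. by move=> P; rewrite prod_op_m // /= modn_mod pres_m. Qed.
Lemma prod_restr_n m n hm hn (hcop : coprime m n) k (f f' : op 'I_(m*n) k) x :
  preserves_mod n f' ->
  (@prod_op m n hm hn k (restr_m hm hn f) (restr_n hm hn f') x : nat) = f' x %[mod n].
Proof. by move=> P; rewrite prod_op_n // /= modn_mod pres_n. Qed.

Lemma add_closed m n hm hn C k (f f' : op 'I_(m*n) k.+1) :
  @in_J m n hm hn C -> C k f -> C k f' ->
  C k (fun x => ord_mod (mn_gt0 hm hn) (f x + f' x)).
Proof.
case=> [[Cp Cc] _ Cadd] Cf Cf'.
pose g (i : 'I_2) := if i == ord0 then f else f'.
have -> : (fun x => ord_mod (mn_gt0 hm hn) (f x + f' x)) = Defs.comp (addmod (mn_gt0 hm hn)) g.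
  by apply: functional_extensionality => x; apply: val_inj.
by apply: Cc => // i; rewrite /g; case: (i == ord0).
Qed.

Lemma mul_closed m n hm hn C k (f : op 'I_(m*n) k.+1) c :
  @in_J m n hm hn C -> C k f -> C k (fun x => ord_mod (mn_gt0 hm hn) (c.+1 * f x)).
Proof.
move=> HC Cf; elim: c => [|c IH].
  have -> : (fun x => ord_mod (mn_gt0 hm hn) (1 * f x)) = f => //.
  by apply: functional_extensionality => x; apply: val_inj; rewrite /= mul1n modn_small.
have -> : (fun x => ord_mod (mn_gt0 hm hn) (c.+2 * f x)) =
  (fun x => ord_mod (mn_gt0 hm hn) (f x + ord_mod (mn_gt0 hm hn) (c.+1 * f x))).
  by apply: functional_extensionality => x; apply: val_inj; rewrite /= modnDmr mulSn.
exact: add_closed.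
Qed.

Lemma key m n hm hn (hcop : coprime m n) C k (f f' : op 'I_(m*n) k.+1) :
  @in_J m n hm hn C -> C k f -> C k f' ->
  C k (prod_op hm hn (restr_m hm hn f) (restr_n hm hn f')).
Proof.
move=> HC Cf Cf'; have [_ Pres _] := HC.
have [Pm _] := Pres _ _ Cf; have [_ Pn'] := Pres _ _ Cf'.
set c1 := chinese m n 1 0 + m * n; set c2 := chinese m n 0 1 + m * n.
have c1m : c1 = 1 %[mod m] by rewrite /c1 addnC mulnC modnMDl chinese_modl.
have c1n : c1 = 0 %[mod n] by rewrite /c1 addnC modnMDl chinese_modr.
have c2m : c2 = 0 %[mod m] by rewrite /c2 addnC mulnC modnMDl chinese_modl.
have c2n : c2 = 1 %[mod n] by rewrite /c2 addnC modnMDl chinese_modr.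
have c1p : 0 < c1 by rewrite /c1 addn_gt0 mn_gt0 ?orbT.
have c2p : 0 < c2 by rewrite /c2 addn_gt0 mn_gt0 ?orbT.
have <- : (fun x => ord_mod (mn_gt0 hm hn)
     (ord_mod (mn_gt0 hm hn) (c1 * f x) + ord_mod (mn_gt0 hm hn) (c2 * f' x)))
   = prod_op hm hn (restr_m hm hn f) (restr_n hm hn f').
  apply: (op_ext hcop) => x.
  + rewrite prod_restr_m //= modmn_m -modnDm !modmn_m modnDm (lin_mod _ _ c1m c2m).
    by rewrite mul1n mul0n addn0.
  + rewrite prod_restr_n //= modmn_n -modnDm !modmn_n modnDm (lin_mod _ _ c1n c2n).
    by rewrite mul1n mul0n.
apply: add_closed => //.
  by rewrite -(prednK c1p); apply: mul_closed.
by rewrite -(prednK c2p); apply: mul_closed.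
Qed.

Lemma self_prod m n hm hn (hcop : coprime m n) C k (u : op 'I_(m*n) k.+1) :
  @in_J m n hm hn C -> C k u -> u = prod_op hm hn (restr_m hm hn u) (restr_n hm hn u).
Proof.
move=> [_ P _] Cu; have [Pm Pn] := P _ _ Cu.
by apply: (op_ext hcop) => x; [rewrite prod_restr_m | rewrite prod_restr_n].
Qed.

Lemma restr_prod_m m n hm hn (hcop : coprime m n) k (g : op 'I_m k) (h : op 'I_n k) :
  restr_m hm hn (prod_op hm hn g h) = g.
Proof.
apply: functional_extensionality => x; apply: val_inj.
change (nat_of_ord (restr_m hm hn (prod_op hm hn g h) x) = nat_of_ord (g x)).
rewrite restr_m_E prod_op_m //.
have -> : (fun i => ord_mod hm (widen_ord (leq_pmulr m hn) (x i))) = x.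
  by apply: functional_extensionality => i; apply: val_inj; rewrite /= modn_small.
by rewrite modn_small.
Qed.
Lemma restr_prod_n m n hm hn (hcop : coprime m n) k (g : op 'I_m k) (h : op 'I_n k) :
  restr_n hm hn (prod_op hm hn g h) = h.
Proof.
apply: functional_extensionality => x; apply: val_inj.
change ((prod_op hm hn g h (fun i => widen_ord (leq_pmull n hm) (x i)) : nat) %% n = nat_of_ord (h x)).
rewrite prod_op_n //.
have -> : (fun i => ord_mod hn (widen_ord (leq_pmull n hm) (x i))) = x.
  by apply: functional_extensionality => i; apply: val_inj; rewrite /= modn_small.
by rewrite modn_small.
Qed.

Theorem theorem2p2 (m n : nat) (hm : 0 < m) (hn : 0 < n) (hcop : coprime m n) :
  (* C |-> (C_m, C_n) maps J into J_m x J_n *)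
  (forall C, in_J hm hn C -> in_Jk hm (clone_m hm hn C) /\ in_Jk hn (clone_n hm hn C)) /\
  (* (D, E) |-> D x E maps J_m x J_n into J *)
  (forall D E, in_Jk hm D -> in_Jk hn E -> in_J hm hn (clone_prod hm hn D E)) /\
  (* the two maps are mutually inverse *)
  (forall C, in_J hm hn C -> eq_ops (clone_prod hm hn (clone_m hm hn C) (clone_n hm hn C)) C) /\
  (forall D E, in_Jk hm D -> in_Jk hn E ->
     eq_ops (clone_m hm hn (clone_prod hm hn D E)) D /\
     eq_ops (clone_n hm hn (clone_prod hm hn D E)) E) /\
  (* and they are order isomorphisms (hence lattice isomorphisms) *)
  (forall C C', in_J hm hn C -> in_J hm hn C' ->
     (subset_ops C C' <->
      subset_ops (clone_m hm hn C) (clone_m hm hn C') /\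
      subset_ops (clone_n hm hn C) (clone_n hm hn C'))).
Proof.
split; first by move=> C HC; split; [exact: partA_m | exact: partA_n].
split; first by move=> D E; exact: partB.
split.
  move=> C HC k u; split.
    by case=> g [h [[f [Cf ->]] [f' [Cf' ->]] ->]]; exact: key.
  move=> Cu; exists (restr_m hm hn u), (restr_n hm hn u).
  by split; [exists u | exists u | exact: (self_prod hcop HC)].
split.
  move=> D E [[Dp _] _] [[Ep _] _]; split => k g; split.
  - by case=> F [[g' [h' [Dg _ ->]]] ->]; rewrite restr_prod_m.
  - move=> Dg; exists (prod_op hm hn g (proj ord0)); split; last by rewrite restr_prod_m.
    by exists g, (proj ord0); split => //; exact: Ep.
  - by case=> F [[g' [h' [_ Eh ->]]] ->]; rewrite restr_prod_n.
  - move=> Eg; exists (prod_op hm hn (proj ord0) g); split; last by rewrite restr_prod_n.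
    by exists (proj ord0), g; split => //; exact: Dp.
move=> C C' HC HC'; split.
  by move=> S; split => k g [f [Cf ->]]; exists f; split => //; exact: S.
case=> Sm Sn k f Cf.
have: clone_m hm hn C (restr_m hm hn f) by exists f.
move/Sm => [f1 [C'f1 e1]].
have: clone_n hm hn C (restr_n hm hn f) by exists f.
move/Sn => [f2 [C'f2 e2]].
by rewrite (self_prod hcop HC Cf) e1 e2; exact: key.
Qed.
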